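(* Let $\Sigma$ be a finite signature. The axiomatization ${\rm AX}$ is sound and complete for the logic $\mathcal{L}^{\rm KD}(\Sigma)$ with respect to the class $\mathcal{M}(\Sigma)$; that is, a formula of $\mathcal{L}^{\rm KD}(\Sigma)$ is provable in ${\rm AX}$ if and only if it is valid in $\mathcal{M}(\Sigma)$.
   Context: Terms and deductive systems. A signature $\Sigma$ is a finite set of operation symbols with arities (arity-0 symbols are constants). Given a countable set of variables, the term algebra $T_\Sigma$ is the least set containing the variables and closed under applying operation symbols; ground terms are terms without variables, and $T^g_\Sigma$ is the set of ground terms. A ground substitution $\rho$ maps variables to ground terms; $\rho(t)$ replaces each variable of $t$ by its image. A $\Sigma'$-deductive system $D$ is a subset of $\wp_{fin}(T_{\Sigma'})\times T_{\Sigma'}$; an element $(\{t_1,\dots,t_n\},t)$ is a deduction rule, written $t_1,\dots,t_n\triangleright t$. A deduction of $t$ from a set $\Gamma$ of terms is a sequence of ground terms $u_1,\dots,u_m$ with $u_m=t$ such that each $u_i$ is either $\rho(t')$ for some ground substitution $\rho$ and some $t'\in\Gamma$, or $\rho(t')$ for some ground substitution $\rho$ and some rule $t'_1,\dots,t'_k\triangleright t'$ of $D$ such that each $\rho(t'_j)$ equals some $u_{l}$ with $l<i$. Write $\Gamma\vdash_D t$ if such a deduction exists. Let $\Sigma^{\rm KD}=\{\mathsf{ob},\mathsf{true},\mathsf{false},\mathsf{not},\mathsf{and},\mathsf{know},\mathsf{xknow}\}$, with $\mathsf{true},\mathsf{false}$ of arity 0, $\mathsf{ob},\mathsf{not},\mathsf{know},\mathsf{xknow}$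 of arity 1, $\mathsf{and}$ of arity 2. Logic. The primitive propositions of $\mathcal{L}^{\rm KD}(\Sigma)$ are the ground terms $p\in T^g_\Sigma$. Formulas are built from primitive propositions by $\neg$, $\wedge$, the unary modal operators $K$ (implicit knowledge) and $X$ (explicit/deductive algorithmic knowledge), and formulas $\mathit{Ob}(p)$ for primitive propositions $p$. $\phi\vee\psi$, $\phi\Rightarrow\psi$, $\mathit{true}$, $\mathit{false}$ are the usual abbreviations. Each formula $\phi$ is translated to a term $\phi^T$: $p^T=p$, $(\neg\phi)^T=\mathsf{not}(\phi^T)$, $(\phi\wedge\psi)^T=\mathsf{and}(\phi^T,\psi^T)$, $(K\phi)^T=\mathsf{know}(\phi^T)$, $(X\phi)^T=\mathsf{xknow}(\phi^T)$, $(\mathit{Ob}(p))^T=\mathsf{ob}(p)$. Structures. A deductive algorithmic knowledge structure is $M=(S,\pi,D)$ where $S$ is a set of states, each of the form $(e,O)$ with $O$ a finite set of primitive propositions (the observations), $\pi$ assigns to each state $s$ and primitive proposition $p$ a truth value $\pi(s)(p)\in\{\textbf{true},\textbf{false}\}$, and $D$ is a $\Sigma\cup\Sigma^{\rm KD}$-deductive system. Let $s\sim s'$ iff $s=(e,O)$ and $s'=(e',O)$ for the same $O$. Satisfaction: $(M,s)\models p$ iff $\pi(s)(p)=\textbf{true}$; negation and conjunction as usual; $(M,s)\models K\phi$ iff $(M,s')\models\phi$ for all $s'\sim s$; $(M,s)\models X\phi$ iff $s=(e,O)$ and $\{\mathsf{ob}(p)\mid p\in O\}\vdash_D\phi^T$;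 $(M,s)\models\mathit{Ob}(p)$ iff $s=(e,O)$ and $p\in O$. $\mathcal{M}(\Sigma)$ is the class of all such structures (with any $\Sigma\cup\Sigma^{\rm KD}$-deductive system). A formula is valid in a class if true at every state of every structure in the class. Axiomatization ${\rm AX}$: Taut (all instances of propositional tautologies); MP (from $\phi$ and $\phi\Rightarrow\psi$ infer $\psi$); K1 $(K\phi\wedge K(\phi\Rightarrow\psi))\Rightarrow K\psi$; K2 from $\phi$ infer $K\phi$; K3 $K\phi\Rightarrow\phi$; K4 $K\phi\Rightarrow KK\phi$; K5 $\neg K\phi\Rightarrow K\neg K\phi$; X1 $X\phi\Rightarrow KX\phi$; X2 $\mathit{Ob}(p)\Rightarrow X\mathit{Ob}(p)$; X3 $\mathit{Ob}(p)\Rightarrow K\mathit{Ob}(p)$. Sound w.r.t. a class: every provable formula is valid in it; complete: every valid formula is provable. *)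

(* Defs.v *)
From mathcomp Require Import all_boot.
Set Implicit Arguments.
Unset Strict Implicit.
Unset Printing Implicit Defensive.

Inductive term (S : Type) : Type :=
| Var of nat
| App of S & seq (term S).
Arguments Var {S} _.

Section Terms.
Variables (S : Type) (ar : S -> nat).

Fixpoint wfb (t : term S) : bool :=
  match t with
  | Var _ => true
  | App f ts => (size ts == ar f) && all wfb ts
  end.

Fixpoint groundb (t : term S) : bool :=
  match t with
  | Var _ => false
  | App _ ts => all groundb ts
  end.

Fixpoint subst (rho : nat -> term S) (t : term S) : term S :=
  match t with
  | Var x => rho x
  | App f ts => App f (map (subst rho) ts)
  end.

Definition ground_subst (rho : nat -> term S) : Prop :=
  forall x, groundb (rho x) && wfb (rho x).

Definition gterm := {t : term S | groundb t && wfb t}.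
End Terms.

Fixpoint inlist (T : Type) (x : T) (s : seq T) : Prop :=
  match s with
  | [::] => False
  | y :: s' => x = y \/ inlist x s'
  end.

(* A deductive system: a set of rules (premises, conclusion); the finite set
   of premises is given as a list. *)
Definition deductive_system (S : Type) := seq (term S) -> term S -> Prop.

Section Deduction.
Variables (S : Type) (ar : S -> nat) (D : deductive_system S).

Definition is_deduction (Gamma : seq (term S)) (us : seq (term S)) : Prop :=
  forall i, i < size us ->
    exists rho, ground_subst ar rho /\
      ((exists t', inlist t' Gamma /\ nth (Var 0) us i = subst rho t') \/
       (exists prem c, D prem c /\ nth (Var 0) us i = subst rho c /\
          forall tj, inlist tj prem ->
            exists l, l < i /\ nth (Var 0) us l = subst rho tj)).

Definition deducible (Gamma : seq (term S)) (t : term S) : Prop :=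
  exists us, is_deduction Gamma (rcons us t).
End Deduction.

Inductive KDsym := KOb | KTrue | KFalse | KNot | KAnd | KKnow | KXknow.

Definition kd_ar (k : KDsym) : nat :=
  match k with
  | KTrue | KFalse => 0
  | KOb | KNot | KKnow | KXknow => 1
  | KAnd => 2
  end.

Definition sym_ext (F : Type) := (F + KDsym)%type.
Definition ar_ext (F : Type) (ar : F -> nat) (f : sym_ext F) : nat :=
  match f with inl g => ar g | inr k => kd_ar k end.

Fixpoint emb (F : Type) (t : term F) : term (sym_ext F) :=
  match t with
  | Var x => Var x
  | App f ts => App (inl f) (map (@emb F) ts)
  end.

Section Logic.
Variables (F : Type) (ar : F -> nat).

Notation prim := (gterm ar).

Inductive form : Type :=
| Prim of prim
| Neg of form
| And of form & form
| Kn of form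
| Xn of form
| Ob of prim.

Definition Or (a b : form) := Neg (And (Neg a) (Neg b)).
Definition Imp (a b : form) := Neg (And a (Neg b)).

Fixpoint trans (phi : form) : term (sym_ext F) :=
  match phi with
  | Prim p => emb (val p)
  | Neg a => App (inr KNot) [:: trans a]
  | And a b => App (inr KAnd) [:: trans a; trans b]
  | Kn a => App (inr KKnow) [:: trans a]
  | Xn a => App (inr KXknow) [:: trans a]
  | Ob p => App (inr KOb) [:: emb (val p)]
  end.

(* States are pairs (e, O) with e in an arbitrary environment type and O a
   finite set of primitive propositions (given as a list). *)
Record kd_structure : Type := KDStructure {
  env : Type;
  states : (env * seq prim)%type -> Prop;
  pi : (env * seq prim)%type -> prim -> bool;
  D : deductive_system (sym_ext F);
  D_wf : forall prem c, D prem c ->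
           all (wfb (ar_ext ar)) prem && wfb (ar_ext ar) c
}.
Arguments states : clear implicits.
Arguments pi : clear implicits.
Arguments D : clear implicits.

Definition same_obs (O O' : seq prim) : Prop :=
  forall p, inlist p O <-> inlist p O'.

Local Unset Implicit Arguments.
Fixpoint sat (M : kd_structure) (s : (env M * seq prim)%type) (phi : form)
  : Prop :=
  match phi with
  | Prim p => pi M s p = true
  | Neg a => ~ sat M s a
  | And a b => sat M s a /\ sat M s b
  | Kn a => forall s', states M s' -> same_obs s.2 s'.2 -> sat M s' a
  | Xn a => deducible (ar_ext ar) (D M)
              [seq App (inr KOb) [:: emb (val p)] | p <- s.2] (trans a)
  | Ob p => inlist p s.2
  end.

Local Set Implicit Arguments.
Definition valid (phi : form) : Prop :=
  forall (M : kd_structure) s, states M s -> sat M s phi.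

Inductive pform : Type :=
| PVar of nat
| PNeg of pform
| PAnd of pform & pform.

Fixpoint peval (v : nat -> bool) (q : pform) : bool :=
  match q with
  | PVar n => v n
  | PNeg a => ~~ peval v a
  | PAnd a b => peval v a && peval v b
  end.

Definition tautology (q : pform) : Prop := forall v, peval v q = true.

Fixpoint pinst (sigma : nat -> form) (q : pform) : form :=
  match q with
  | PVar n => sigma n
  | PNeg a => Neg (pinst sigma a)
  | PAnd a b => And (pinst sigma a) (pinst sigma b)
  end.

Inductive provable : form -> Prop :=
| AX_Taut q sigma : tautology q -> provable (pinst sigma q)
| AX_MP phi psi : provable phi -> provable (Imp phi psi) -> provable psi
| AX_K1 phi psi : provable (Imp (And (Kn phi) (Kn (Imp phi psi))) (Kn psi))
| AX_K2 phi : provable phi -> provable (Kn phi)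
| AX_K3 phi : provable (Imp (Kn phi) phi)
| AX_K4 phi : provable (Imp (Kn phi) (Kn (Kn phi)))
| AX_K5 phi : provable (Imp (Neg (Kn phi)) (Kn (Neg (Kn phi))))
| AX_X1 phi : provable (Imp (Xn phi) (Kn (Xn phi)))
| AX_X2 p : provable (Imp (Ob p) (Xn (Ob p)))
| AX_X3 p : provable (Imp (Ob p) (Kn (Ob p))).
End Logic.

(* Main.v *)
Require Import Defs.
From mathcomp Require Import all_boot.
From mathcomp Require classical_sets.
From Stdlib Require Import Classical ClassicalEpsilon.
Set Implicit Arguments.
Unset Strict Implicit.
Unset Printing Implicit Defensive.

Section TermLemmas.
Variable S : Type.

Fixpoint term_ind2 (P : term S -> Prop) (HV : forall n, P (Var n))
  (HA : forall f ts, (forall t, inlist t ts -> P t) -> P (App f ts)) (t : term S) : P t :=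
  match t with
  | Var n => HV n
  | App f ts => HA f ts
      ((fix go (l : seq (term S)) : forall u, inlist u l -> P u :=
         match l with
         | [::] => fun u H => False_ind _ H
         | t0 :: l' => fun u H =>
             match H with
             | or_introl E => eq_ind_r P (term_ind2 HV HA t0) E
             | or_intror H' => go l' u H'
             end
         end) ts)
  end.

Lemma all_inlist (p : pred (term S)) ts :
  all p ts = true <-> (forall t, inlist t ts -> p t = true).
Proof.
elim: ts => [|t ts IH] /=; first by split.
split.
- move/andP=> [H1 H2] u [->|Hu] //; by apply IH.
- move=> H; apply/andP; split; first by apply H; left.
  apply/IH => u Hu; apply H; by right.
Qed.

Lemma map_inlist_eq (f : term S -> term S) ts :
  (forall t, inlist t ts -> f t = t) -> map f ts = ts.
Proof.
elim: ts => [|t ts IH] //= H; rewrite H; last by left.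
by rewrite IH // => u Hu; apply H; right.
Qed.

Lemma subst_ground (rho : nat -> term S) (t : term S) : groundb t = true -> subst rho t = t.
Proof.
elim/term_ind2: t => [n //|f ts IH] /= /all_inlist Hg.
by rewrite map_inlist_eq // => u Hu; apply IH => //; apply Hg.
Qed.
End TermLemmas.

Lemma inlist_map (A B : Type) (f : A -> B) (s : seq A) t :
  inlist t (map f s) <-> exists p, inlist p s /\ t = f p.
Proof.
elim: s => [|a s IH] /=; first by split => // [[p []]].
split.
- case=> [->|H]; first by exists a; split => //; left.
  case/IH: H => p [H1 H2]; exists p; split => //; by right.
- case=> p [[->|H1] H2]; first by left.
  right; apply/IH; by exists p.
Qed.

Section Emb.
Variables (F : Type) (ar : F -> nat).

Lemma emb_ground (t : term F) : groundb t = true -> groundb (emb t) = true.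
Proof.
elim/term_ind2: t => [n //|f ts IH] /= /all_inlist Hg.
apply/all_inlist => u /inlist_map [v [Hv ->]]. by apply IH => //; apply Hg.
Qed.

Lemma emb_wf (t : term F) : wfb ar t = true -> wfb (ar_ext ar) (emb t) = true.
Proof.
elim/term_ind2: t => [n //|f ts IH] /= /andP [Hs /all_inlist Hg].
rewrite size_map Hs /=.
apply/all_inlist => u /inlist_map [v [Hv ->]]. by apply IH => //; apply Hg.
Qed.

Fixpoint unemb (t : term (sym_ext F)) : term F :=
  match t with
  | Var x => Var x
  | App (inl f) ts => App f (map unemb ts)
  | App (inr _) _ => Var 0
  end.

Lemma unembK (t : term F) : unemb (emb t) = t.
Proof.
elim/term_ind2: t => [n //|f ts IH] /=.
rewrite -map_comp map_inlist_eq //.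
Qed.
End Emb.

Section Prop2.
Variables (F : Type) (ar : F -> nat).
Notation form := (form ar).
Notation provable := (@provable F ar).

Definition PImp (x y : pform) := PNeg (PAnd x (PNeg y)).

Lemma taut_inst q (H : tautology q) (l : seq form) (d : form) :
  provable (pinst (fun n => nth d l n) q).
Proof. exact: AX_Taut. Qed.

Ltac tt q l :=
  match l with
  | ?a :: _ => refine (@taut_inst q _ l a); let v := fresh "v" in
     move=> v /=; by case: (v 0); case: (v 1); case: (v 2)
  end.

Lemma T1 (a b : form) : provable (Imp a (Imp b a)).
Proof. tt (PImp (PVar 0) (PImp (PVar 1) (PVar 0))) [:: a; b]. Qed.
Lemma T2 (a b c : form) : provable (Imp (Imp a (Imp b c)) (Imp (Imp a b) (Imp a c))).
Proof. tt (PImp (PImp (PVar 0) (PImp (PVar 1) (PVar 2))) (PImp (PImp (PVar 0) (PVar 1)) (PImp (PVar 0) (PVar 2)))) [:: a; b; c]. Qed.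
Lemma T3 (a : form) : provable (Imp a a).
Proof. tt (PImp (PVar 0) (PVar 0)) [:: a]. Qed.
Lemma T4 (a b : form) : provable (Imp a (Imp b (And a b))).
Proof. tt (PImp (PVar 0) (PImp (PVar 1) (PAnd (PVar 0) (PVar 1)))) [:: a; b]. Qed.
Lemma T5l (a b : form) : provable (Imp (And a b) a).
Proof. tt (PImp (PAnd (PVar 0) (PVar 1)) (PVar 0)) [:: a; b]. Qed.
Lemma T5r (a b : form) : provable (Imp (And a b) b).
Proof. tt (PImp (PAnd (PVar 0) (PVar 1)) (PVar 1)) [:: a; b]. Qed.
Lemma T6 (a b : form) : provable (Imp (Imp a b) (Imp (Imp a (Neg b)) (Neg a))).
Proof. tt (PImp (PImp (PVar 0) (PVar 1)) (PImp (PImp (PVar 0) (PNeg (PVar 1))) (PNeg (PVar 0)))) [:: a; b]. Qed.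
Lemma T8 (a b : form) : provable (Imp (Imp (Neg a) b) (Imp (Imp (Neg a) (Neg b)) a)).
Proof. tt (PImp (PImp (PNeg (PVar 0)) (PVar 1)) (PImp (PImp (PNeg (PVar 0)) (PNeg (PVar 1))) (PVar 0))) [:: a; b]. Qed.
Lemma Tcontra (a b : form) : provable (Imp (Imp a b) (Imp (Neg b) (Neg a))).
Proof. tt (PImp (PImp (PVar 0) (PVar 1)) (PImp (PNeg (PVar 1)) (PNeg (PVar 0)))) [:: a; b]. Qed.
Lemma Ttrans (a b c : form) : provable (Imp (Imp a b) (Imp (Imp b c) (Imp a c))).
Proof. tt (PImp (PImp (PVar 0) (PVar 1)) (PImp (PImp (PVar 1) (PVar 2)) (PImp (PVar 0) (PVar 2)))) [:: a; b; c]. Qed.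
Lemma Tcurry (a b c : form) : provable (Imp (Imp (And a b) c) (Imp b (Imp a c))).
Proof. tt (PImp (PImp (PAnd (PVar 0) (PVar 1)) (PVar 2)) (PImp (PVar 1) (PImp (PVar 0) (PVar 2)))) [:: a; b; c]. Qed.

Lemma mp2 a b c : provable (Imp a (Imp b c)) -> provable a -> provable b -> provable c.
Proof. move=> H Ha Hb; apply: AX_MP Hb _; exact: AX_MP Ha H. Qed.

Lemma imp_trans (a b c : form) : provable (Imp a b) -> provable (Imp b c) -> provable (Imp a c).
Proof. move=> H1 H2; exact: mp2 (Ttrans a b c) H1 H2. Qed.

Lemma K_mono (a b : form) : provable (Imp a b) -> provable (Imp (Kn a) (Kn b)).
Proof.
move=> H; apply: AX_MP (AX_K2 H) _.
exact: AX_MP (AX_K1 a b) (Tcurry _ _ _).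
Qed.

Lemma negK (b : form) : provable (Imp b (Kn b)) -> provable (Imp (Neg b) (Kn (Neg b))).
Proof.
move=> H.
have s1 : provable (Imp (Neg b) (Neg (Kn b))) by exact: AX_MP (AX_K3 b) (Tcontra _ _).
have s3 : provable (Imp (Neg (Kn b)) (Neg b)) by exact: AX_MP H (Tcontra _ _).
apply: imp_trans s1 _; apply: imp_trans (AX_K5 b) _; exact: K_mono.
Qed.

Inductive Der (G : form -> Prop) : form -> Prop :=
| DHyp a : G a -> Der G a
| DAx a : provable a -> Der G a
| DMP a b : Der G a -> Der G (Imp a b) -> Der G b.

Lemma Der_mono (G H : form -> Prop) a : (forall x, G x -> H x) -> Der G a -> Der H a.
Proof.
move=> GH; elim=> [x Gx|x Px|x y _ IH1 _ IH2]; [exact/DHyp/GH|exact: DAx|exact: DMP IH1 IH2].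
Qed.

Lemma Der_mp2 G a b c : provable (Imp a (Imp b c)) -> Der G a -> Der G b -> Der G c.
Proof. move=> H Ha Hb; apply: DMP Hb _; apply: DMP Ha _; exact: DAx. Qed.

Lemma deduction G a b : Der (fun x => G x \/ x = a) b -> Der G (Imp a b).
Proof.
elim=> [x [Gx| ->]|x Px|x y _ IH1 _ IH2].
- exact: DMP (@DHyp G _ Gx) (@DAx G _ (T1 _ _)).
- exact: (@DAx G _ (T3 _)).
- exact: DMP (@DAx G _ Px) (@DAx G _ (T1 _ _)).
- exact: Der_mp2 (T2 _ _ _) IH2 IH1.
Qed.

Lemma Der_empty a : Der (fun _ => False) a -> provable a.
Proof. elim=> [x []|x Px|x y _ IH1 _ IH2] //; exact: AX_MP IH1 IH2. Qed.

Definition Consis (G : form -> Prop) := forall b, Der G b -> Der G (Neg b) -> False.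

Lemma incons_pos G a : ~ Consis (fun x => G x \/ x = a) -> Der G (Neg a).
Proof.
move=> H; apply: NNPP => H2; apply: H => b Hb Hnb.
apply: H2; exact: Der_mp2 (T6 _ _) (deduction Hb) (deduction Hnb).
Qed.

Lemma incons_neg G a : ~ Consis (fun x => G x \/ x = Neg a) -> Der G a.
Proof.
move=> H; apply: NNPP => H2; apply: H => b Hb Hnb.
apply: H2; exact: Der_mp2 (T8 _ _) (deduction Hb) (deduction Hnb).
Qed.

Definition Max (G : form -> Prop) := Consis G /\ forall c, Consis (fun x => G x \/ x = c) -> G c.

Lemma max_der G c : Max G -> Der G c -> G c.
Proof.
move=> [HC HM] Hc; apply: HM => b Hb Hnb.
exact: HC (DMP Hc (deduction Hb)) (DMP Hc (deduction Hnb)).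
Qed.

Lemma max_prov G c : Max G -> provable c -> G c.
Proof. move=> HG Hc; apply: max_der HG (@DAx _ _ Hc). Qed.

Lemma max_mp G a b : Max G -> G (Imp a b) -> G a -> G b.
Proof. move=> HG H1 H2; apply: max_der HG (DMP (@DHyp _ _ H2) (@DHyp _ _ H1)). Qed.

Lemma max_neg G a : Max G -> (G (Neg a) <-> ~ G a).
Proof.
move=> HG; split.
- move=> H1 H2; exact: HG.1 (@DHyp _ _ H2) (@DHyp _ _ H1).
- move=> H; apply: (max_der HG); apply: incons_pos => HC; apply: H; exact: HG.2.
Qed.

Lemma max_and G a b : Max G -> (G (And a b) <-> G a /\ G b).
Proof.
move=> HG; split.
- move=> H; split; [exact: max_mp HG (max_prov HG (T5l a b)) H|exact: max_mp HG (max_prov HG (T5r a b)) H].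
- case=> H1 H2; apply: max_der HG _; exact: Der_mp2 (T4 _ _) (@DHyp _ _ H1) (@DHyp _ _ H2).
Qed.

Lemma K_der G b : Der (fun x => G (Kn x)) b -> Der G (Kn b).
Proof.
elim=> [x Gx|x Px|x y _ IH1 _ IH2]; first exact: DHyp; first exact/DAx/AX_K2.
apply: DMP (@DAx G _ (AX_K1 x y)).
exact: Der_mp2 (T4 _ _) IH1 IH2.
Qed.

End Prop2.

Section Lind.
Variables (F : Type) (ar : F -> nat).
Notation form := (form ar).

Lemma Cons_sub (G H : form -> Prop) : (forall x, G x -> H x) -> Consis H -> Consis G.
Proof. move=> GH HC b H1 H2; exact: HC (Der_mono GH H1) (Der_mono GH H2). Qed.

Lemma lindenbaum (Gs : form -> Prop) : Consis Gs -> exists G, Max G /\ forall x, Gs x -> G x.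
Proof.
move=> HC.
pose Pz := fun A : form -> Prop => Consis (fun x => Gs x \/ A x).
have := @classical_sets.Zorn_bigcup form Pz.
case.
- move=> Fm FmP Ftot.
  have comp : forall b, Der (fun x => Gs x \/ classical_sets.bigcup Fm id x) b ->
     Der Gs b \/ exists X, Fm X /\ Der (fun x => Gs x \/ X x) b.
    move=> b; elim=> [x [Gx|[X FX Xx]]|x Px|x y _ IH1 _ IH2].
    + by left; apply: DHyp.
    + right; exists X; split => //; apply: DHyp; by right.
    + by left; apply: DAx.
    + have sub : forall X (bb : form), Der Gs bb -> Der (fun x => Gs x \/ X x) bb.
        by move=> X bb Hb; apply: Der_mono Hb => z Hz; left.
      case: IH1 => [H1|[X [FX H1]]]; case: IH2 => [H2|[Y [FY H2]]].
      * left; exact: DMP H1 H2.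
      * right; exists Y; split => //; exact: DMP (sub _ _ H1) H2.
      * right; exists X; split => //; exact: DMP H1 (sub _ _ H2).
      * right; case: (Ftot X Y FX FY) => XY.
        -- exists Y; split => //; apply: DMP _ H2; apply: Der_mono H1 => z [Hz|Hz]; [left|right; apply: XY] => //.
        -- exists X; split => //; apply: DMP H1 _; apply: Der_mono H2 => z [Hz|Hz]; [left|right; apply: XY] => //.
  have FmC : forall X, Fm X -> Consis (fun x => Gs x \/ X x) := FmP.
  rewrite /Pz => b Hb Hnb.
  have sub : forall X (b : form), Der Gs b -> Der (fun x => Gs x \/ X x) b.
    by move=> X b' Hb'; apply: Der_mono Hb' => z Hz; left.
  case: (comp _ Hb) => [H1|[X [FX H1]]]; case: (comp _ Hnb) => [H2|[Y [FY H2]]].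
  + exact: HC H1 H2.
  + exact: (FmC Y FY) (sub _ _ H1) H2.
  + exact: (FmC X FX) H1 (sub _ _ H2).
  + case: (Ftot X Y FX FY) => XY.
    * apply: (FmC Y FY b) _ H2; apply: Der_mono H1 => z [Hz|Hz]; [left|right; apply: XY] => //.
    * apply: (FmC X FX b H1); apply: Der_mono H2 => z [Hz|Hz]; [left|right; apply: XY] => //.
- move=> A [PA Amax]; exists (fun x => Gs x \/ A x); split; last by move=> x Hx; left.
  split => // c Hc.
  right; apply: NNPP => nAc.
  apply: (Amax (fun x => A x \/ x = c)).
  + split; first by move=> z Hz; left.
    move=> H; apply: nAc; apply: H; by right.
  + apply: Cons_sub Hc => z [Hz|[Hz|Hz]]; [left; left|left; right|right] => //.
Qed.

Definition Rel (G0 D : form -> Prop) := forall x, G0 (Kn x) -> D x.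

Lemma exists_world (G0 : form -> Prop) a : Max G0 -> ~ G0 (Kn a) ->
  exists D, Max D /\ Rel G0 D /\ D (Neg a).
Proof.
move=> HG Hn.
have HC : Consis (fun x => G0 (Kn x) \/ x = Neg a).
  apply: NNPP => H; apply: Hn; apply: max_der HG _; apply: K_der; exact: incons_neg H.
case: (lindenbaum HC) => D [HD sub]; exists D; split => //; split.
- by move=> x Hx; apply: sub; left.
- by apply: sub; right.
Qed.

Lemma const (G0 D : form -> Prop) b : provable (Imp b (Kn b)) -> Max G0 -> Max D -> Rel G0 D ->
  (G0 b <-> D b).
Proof.
move=> Hb HG HD HR; split.
- move=> H; apply: HR; exact: max_mp HG (max_prov HG Hb) H.
- move=> H; apply: NNPP => H2.
  have : G0 (Neg b) by apply/(max_neg _ HG).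
  move=> /(max_mp HG (max_prov HG (negK Hb))) /HR /(max_neg _ HD); by apply.
Qed.

End Lind.

Definition asb (P : Prop) : bool := if excluded_middle_informative P then true else false.
Lemma asbP P : asb P = true <-> P.
Proof. rewrite /asb; case: excluded_middle_informative => //. Qed.

Section Ded.
Variables (S : Type) (ar : S -> nat) (D : deductive_system S).

Lemma deducible_last Gm t : deducible ar D Gm t ->
  (exists t' rho, inlist t' Gm /\ t = subst rho t') \/
  (exists prem c rho, D prem c /\ t = subst rho c).
Proof.
case=> us H; have := H (size us); rewrite size_rcons ltnSn nth_rcons ltnn eqxx.
case=> // rho [_ [[t' [H1 H2]]|[prem [c [H1 [H2 _]]]]]].
- left; by exists t', rho.
- right; by exists prem, c, rho.
Qed.

Lemma deducible_one Gm t rho : ground_subst ar rho ->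
  ((exists t', inlist t' Gm /\ t = subst rho t') \/
   (exists c, D [::] c /\ t = subst rho c)) -> deducible ar D Gm t.
Proof.
move=> Hr H; exists [::] => i; rewrite size_rcons => /= Hi.
have -> : i = 0 by case: i Hi.
exists rho; split => //; case: H => [H|[c [Hc E]]]; first by left.
right; exists [::], c; split => //.
Qed.

Lemma deduction_mono (G1 G2 : seq (term S)) us :
  (forall t, inlist t G1 -> inlist t G2) -> is_deduction ar D G1 us -> is_deduction ar D G2 us.
Proof.
move=> sub H i Hi; case: (H i Hi) => rho [Hr [[t' [H1 H2]]|H']]; exists rho; split => //.
- left; exists t'; split => //; exact: sub.
- by right.
Qed.
End Ded.

Section Forms.
Variables (F : Type) (ar : F -> nat).
Notation form := (form ar).
Notation prim := (gterm ar).

Definition rho0 : nat -> term (sym_ext F) := fun _ => App (inr KTrue) [::].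
Lemma rho0_ground : ground_subst (ar_ext ar) rho0.
Proof. by []. Qed.

Lemma prim_ground (p : prim) : groundb (emb (val p)) = true.
Proof. case: p => t /= /andP [H _]; exact: emb_ground. Qed.

Lemma prim_wf (p : prim) : wfb (ar_ext ar) (emb (val p)) = true.
Proof. case: p => t /= /andP [_ H]; exact: emb_wf. Qed.

Lemma trans_ground (a : form) : groundb (trans a) = true.
Proof. elim: a => //= [p|a -> |a -> b ->|a ->|a ->|p]; rewrite ?prim_ground //. Qed.

Lemma trans_wf (a : form) : wfb (ar_ext ar) (trans a) = true.
Proof. elim: a => //= [p|a -> |a -> b ->|a ->|a ->|p]; rewrite ?prim_wf //. Qed.

Lemma prim_head (p : prim) : exists f ts, emb (val p) = App (inl f) ts.
Proof. case: p => [[n|f ts] H] //=; by exists f, (map (@emb F) ts). Qed.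

Lemma emb_inj (s t : term F) : emb s = emb t -> s = t.
Proof. move=> H; by rewrite -(unembK s) -(unembK t) H. Qed.

Lemma prim_inj (p q : prim) : emb (val p) = emb (val q) -> p = q.
Proof. move/emb_inj; exact: val_inj. Qed.

Lemma trans_inj (a b : form) : trans a = trans b -> a = b.
Proof.
elim: a b => [p|a IH|a IHa a' IHa'|a IH|a IH|p] [q|b|b b'|b|b|q] /=;
  try (by move/prim_inj ->); try (by case=> /prim_inj ->);
  try (by case=> /IH ->); try (by case=> /IHa -> /IHa' ->);
  try (case: (prim_head p) => f [ts ->]); try (case: (prim_head q) => g [us ->]);
  try discriminate.
Qed.

End Forms.

Section Model.
Variables (F : Type) (ar : F -> nat).
Notation form := (form ar).
Notation prim := (gterm ar).

Fixpoint obsl (a : form) : seq prim :=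
  match a with
  | Prim _ => [::]
  | Neg a => obsl a
  | And a b => obsl a ++ obsl b
  | Kn a => obsl a
  | Xn _ => [::]
  | Ob p => [:: p]
  end.

Fixpoint obs_ok (P : seq prim) (a : form) : Prop :=
  match a with
  | Prim _ => True
  | Neg a => obs_ok P a
  | And a b => obs_ok P a /\ obs_ok P b
  | Kn a => obs_ok P a
  | Xn _ => True
  | Ob p => inlist p P
  end.

Lemma inlist_cat (T : Type) (x : T) s1 s2 : inlist x (s1 ++ s2) <-> inlist x s1 \/ inlist x s2.
Proof.
elim: s1 => [|y s1 IH] /=; first by tauto.
split; first by case=> [->|/IH [H|H]]; [left; left|left; right|right].
by case=> [[->|H]|H]; [left|right; apply/IH; left|right; apply/IH; right].
Qed.

Lemma inlist_filter (T : Type) (f : pred T) x s : inlist x (filter f s) <-> inlist x s /\ f x.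
Proof.
elim: s => [|y s IH] /=; first by tauto.
case Hy: (f y) => /=.
- split; first by case=> [->|/IH [H1 H2]]; split => //; [left|right].
  by case=> [[->|H] Hx]; [left|right; apply/IH].
- split; first by case/IH=> H1 H2; split => //; right.
  case=> [[E|H] Hx]; last by apply/IH.
  by move: Hx; rewrite E Hy.
Qed.

Lemma obs_ok_of (P : seq prim) (a : form) :
  (forall p, inlist p (obsl a) -> inlist p P) -> obs_ok P a.
Proof.
elim: a => [p|a IH|a IHa b IHb|a IH|a IH|p] /= H //.
- exact: IH.
- split; [apply: IHa|apply: IHb] => p Hp; apply: H; apply/inlist_cat; by [left|right].
- exact: IH.
- by apply: H; left.
Qed.

Variables (G0 : form -> Prop) (HG0 : Max G0) (P : seq prim).

Definition Obs : seq prim := filter (fun q => asb (G0 (Ob q))) P.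

Definition Dm : deductive_system (sym_ext F) :=
  fun prem c => prem = [::] /\ exists a, G0 (Xn a) /\ c = trans a.

Lemma Dm_wf prem c : Dm prem c -> all (wfb (ar_ext ar)) prem && wfb (ar_ext ar) c.
Proof. by case=> -> [a [_ ->]]; rewrite /= trans_wf. Qed.

Definition Mc : kd_structure ar :=
  @KDStructure F ar (form -> Prop)
     (fun s => Max s.1 /\ Rel G0 s.1 /\ s.2 = Obs)
     (fun s p => asb (s.1 (Prim p)))
     Dm Dm_wf.

Lemma truth (a : form) : obs_ok P a -> forall Dl, Max Dl -> Rel G0 Dl ->
  (@sat F ar Mc (Dl, Obs) a <-> Dl a).
Proof.
elim: a => [p|a IH|a IHa b IHb|a IH|a IH|p] /= Hok Dl HD HR.
- exact: asbP.
- rewrite (max_neg _ HD); by rewrite IH.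
- rewrite (max_and _ _ HD) IHa ?IHb //; by case: Hok. 
- rewrite -(const (AX_K4 a) HG0 HD HR); split.
  + move=> H; apply: NNPP => Hn.
    case: (exists_world HG0 Hn) => D' [HD' [HR' Hna]].
    have : D' a by apply/(IH Hok D' HD' HR'); apply: H => //.
    by apply/(max_neg _ HD').
  + move=> H [D' O'] [HD' [HR' /= EO]] _; rewrite EO.
    apply/(IH Hok D' HD' HR'); apply: HR'; exact: H.
- rewrite -(const (AX_X1 a) HG0 HD HR); split.
  + case/deducible_last => [[t' [rho [/inlist_map [q [Hq ->]] E]]]|[prem [c [rho [[_ [b [Hb ->]]] E]]]]].
    * move: E; rewrite subst_ground /=; last by rewrite prim_ground.
      move=> E; have -> : a = Ob q by apply: trans_inj.
      apply: max_mp HG0 (max_prov HG0 (AX_X2 q)) _.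
      by case/inlist_filter: Hq => _ /asbP.
    * move: E; rewrite subst_ground ?trans_ground // => /trans_inj ->; exact: Hb.
  + move=> H; apply: (deducible_one (rho := rho0 F)) => //.
    right; exists (trans a); split; first by split => //; exists a.
    by rewrite subst_ground ?trans_ground.
- rewrite -(const (AX_X3 p) HG0 HD HR); split; first by case/inlist_filter => _ /asbP.
  move=> H; apply/inlist_filter; split => //; exact/asbP.
Qed.

End Model.

Lemma completeness (F : Type) (ar : F -> nat) (phi : form ar) : valid phi -> provable phi.
Proof.
move=> Hv; apply: NNPP => Hn.
have HC : Consis (fun x : form ar => (fun _ => False) x \/ x = Neg phi).
  apply: NNPP => H; apply: Hn; apply: Der_empty; exact: incons_neg H.
case: (lindenbaum HC) => G0 [HG sub].
have HR : Rel G0 G0 by move=> x Hx; exact: max_mp HG (max_prov HG (AX_K3 x)) Hx.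
have Hs : @states F ar (Mc G0 (obsl phi)) (G0, Obs G0 (obsl phi)) by split => //; split.
have := Hv _ _ Hs.
move/(truth HG (obs_ok_of (fun p (H : inlist p (obsl phi)) => H)) HG HR).
by apply/(max_neg _ HG); apply: sub; right.
Qed.

Section Sound.
Variables (F : Type) (ar : F -> nat).
Notation form := (form ar).
Notation prim := (gterm ar).
Variable M : kd_structure ar.
Notation sat := (@sat F ar M).

Lemma sat_imp s (a b : form) : sat s (Imp a b) <-> (sat s a -> sat s b).
Proof. rewrite /Imp /=; split; [move=> H Ha; apply: NNPP => Hb; exact: H|tauto]. Qed.

Lemma sat_pinst s (sigma : nat -> form) q :
  sat s (pinst sigma q) <-> peval (fun n => asb (sat s (sigma n))) q = true.
Proof.
elim: q => [n|q IH|q1 IH1 q2 IH2] /=.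
- by rewrite asbP.
- rewrite IH; by case: (peval _ q).
- rewrite IH1 IH2; by case: (peval _ q1); case: (peval _ q2); split => // [[]].
Qed.

Lemma same_obs_sym (O O' : seq prim) : same_obs O O' -> same_obs O' O.
Proof. move=> H p; by rewrite H. Qed.
Lemma same_obs_trans (O O' O'' : seq prim) : same_obs O O' -> same_obs O' O'' -> same_obs O O''.
Proof. move=> H1 H2 p; by rewrite H1 H2. Qed.

Lemma X_same (O O' : seq prim) (a : form) : same_obs O O' ->
  deducible (ar_ext ar) (D M) [seq App (inr KOb) [:: emb (val p)] | p <- O] (trans a) ->
  deducible (ar_ext ar) (D M) [seq App (inr KOb) [:: emb (val p)] | p <- O'] (trans a).
Proof.
move=> HO [us H]; exists us; apply: deduction_mono H => t /inlist_map [p [Hp ->]].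
apply/inlist_map; exists p; split => //; exact/HO.
Qed.

End Sound.

Lemma soundness (F : Type) (ar : F -> nat) (phi : form ar) : provable phi -> valid phi.
Proof.
elim=> {phi}.
- move=> q sigma Hq M s _; apply/sat_pinst; exact: Hq.
- move=> a b _ IHa _ IHab M s Hs; have := IHab M s Hs; move/sat_imp; apply; exact: IHa.
- move=> a b M s Hs; apply/sat_imp => /= [[H1 H2]] s' Hs' HO.
  have := H2 _ Hs' HO; move/sat_imp; apply; exact: H1.
- move=> a _ IH M s Hs /= s' Hs' _; exact: IH.
- move=> a M s Hs; apply/sat_imp => /= H; apply: H => //.
- move=> a M s Hs; apply/sat_imp => /= H s' Hs' HO s'' Hs'' HO'.
  apply: H => //; exact: same_obs_trans HO HO'.
- move=> a M s Hs; apply/sat_imp => /= H s' Hs' HO H'; apply: H => s'' Hs'' HO'.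
  apply: H' => //; exact: same_obs_trans (same_obs_sym HO) HO'.
- move=> a M s Hs; apply/sat_imp => /= H s' Hs' HO; exact: X_same HO H.
- move=> p M s Hs; apply/sat_imp => /= H.
  apply: (deducible_one (rho := rho0 F)) => //; left.
  exists (App (inr KOb) [:: emb (val p)]); split.
  + apply/inlist_map; by exists p.
  + by rewrite subst_ground //= prim_ground.
- move=> p M s Hs; apply/sat_imp => /= H s' Hs' HO; exact/HO.
Qed.

Theorem theorem4p1 (F : finType) (ar : F -> nat) (phi : form ar) :
  provable phi <-> valid phi.
Proof. split; [exact: soundness|exact: completeness]. Qed.
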